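(* Let $A$ be an associative (not necessarily unital) algebra over a field satisfying the identity $x_1\cdots x_n=x_{\sigma(1)}\cdots x_{\sigma(n)}$, where $\sigma\in S_n$ satisfies $\sigma(1)\ne1$ and $\sigma(n)\ne n$. Then $H_{n+2}$ contains $S(n+2;4,4)$.
   Context: For each $k$, $H_k\subseteq S_k$ is the set of permutations $\tau$ such that $A$ satisfies $x_1\cdots x_k=x_{\tau(1)}\cdots x_{\tau(k)}$ (i.e. $a_1\cdots a_k=a_{\tau(1)}\cdots a_{\tau(k)}$ for all $a_1,\dots,a_k\in A$). For $m\ge a,b$, $S(m;a,b)$ denotes the subgroup of $S_m$ generated by all permutations of the first $a$ letters $\{1,\dots,a\}$ and all permutations of the last $b$ letters $\{m-b+1,\dots,m\}$. *)

(* Defs.v *)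
From HB Require Import structures.
From mathcomp Require Import all_boot all_order all_algebra all_fingroup.
Set Implicit Arguments. Unset Strict Implicit. Unset Printing Implicit Defensive.
Import GRing.Theory.
Local Open Scope ring_scope.

Definition assoc_algebra (K : fieldType) (A : lmodType K) (mul : A -> A -> A) : Prop :=
  [/\ forall (c : K) (x y z : A), mul (c *: x + y) z = c *: mul x z + mul y z,
      forall (c : K) (x y z : A), mul x (c *: y + z) = c *: mul x y + mul x z
    & forall x y z : A, mul x (mul y z) = mul (mul x y) z].

(* Product of a nonempty word x_1 ... x_k (left-bracketed; by associativity
   the bracketing is irrelevant). The empty word is sent to 0 (never used). *)
Definition wprod (A : zmodType) (mul : A -> A -> A) (s : seq A) : A :=
  if s is x :: s' then foldl mul x s' else 0.

(* x_1 ... x_k for a : 'I_k -> A  (index i : 'I_k stands for letter i+1) *)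
Definition ordprod (A : zmodType) (mul : A -> A -> A) (k : nat) (a : 'I_k -> A) : A :=
  wprod mul [seq a i | i <- enum 'I_k].

Definition inH (A : zmodType) (mul : A -> A -> A) (k : nat) (tau : 'S_k) : Prop :=
  forall a : 'I_k -> A, ordprod mul a = ordprod mul (fun i => a (tau i)).

(* S(m; a, b): subgroup of S_m generated by the permutations of the first a
   letters {1..a} (0-based: indices < a) and of the last b letters
   {m-b+1..m} (0-based: indices >= m - b). *)
Definition Sab (m a b : nat) : {set 'S_m} :=
  <<[set s : 'S_m | [forall i : 'I_m, (a <= i)%N ==> (s i == i)]]
    :|: [set s : 'S_m | [forall i : 'I_m, (i < m - b)%N ==> (s i == i)]]>>%g.

(* Main.v *)
Require Import Defs.
From mathcomp Require Import all_boot all_order all_algebra all_fingroup.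
From mathcomp Require Import zify.
Set Implicit Arguments. Unset Strict Implicit. Unset Printing Implicit Defensive.

Ltac cases := repeat match goal with
  | |- context [if ?b then _ else _] => case: (boolP b) => ? end.
Ltac eqf := first [reflexivity | lia | (apply: congr1; lia) | (apply: congr2; eqf) | (apply: congr1; eqf)].
Ltac fin := first [ (exfalso; lia) | eqf ].


Definition prodf (A : zmodType) (mul : A -> A -> A) (k : nat) (f : nat -> A) : A :=
  wprod mul (map f (iota 0 k)).

Definition ins (A : Type) (g : nat) (f : nat -> A) (z : A) : nat -> A :=
  fun i => if i < g then f i else if i == g then z else f i.-1.
Definition del (A : Type) (g : nat) (f : nat -> A) : nat -> A :=
  fun i => if i < g then f i else f i.+1.
Definition upd (A : Type) (f : nat -> A) (g : nat) (y : A) : nat -> A :=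
  fun i => if i == g then y else f i.
Definition mrg (A : Type) (mul : A -> A -> A) (g : nat) (f : nat -> A) : nat -> A :=
  fun i => if i < g then f i else if i == g then mul (f g) (f g.+1) else f i.+1.


Lemma ins_comm (A : Type) i j (w : nat -> A) a b x : i <= j ->
  ins i (ins j w a) b x = ins j.+1 (ins i w b) a x.
Proof. move=> hij; rewrite /ins; cases; fin. Qed.

Lemma ins_del (A : Type) M (w : nat -> A) x : w x = ins M (del M w) (w M) x.
Proof. rewrite /ins /del; cases; fin. Qed.


Lemma foldl_mulA (A : Type) (mul : A -> A -> A)
  (assoc : forall x y z, mul x (mul y z) = mul (mul x y) z) y z s :
  foldl mul (mul y z) s = mul y (foldl mul z s).
Proof. by elim: s z => [|x s IH] z //=; rewrite -assoc IH. Qed.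

Lemma wprod_cons (A : zmodType) (mul : A -> A -> A)
  (assoc : forall x y z, mul x (mul y z) = mul (mul x y) z) x s :
  s != [::] -> wprod mul (x :: s) = mul x (wprod mul s).
Proof. by case: s => [|y s] //= _; rewrite foldl_mulA. Qed.

Lemma wprod_rcons (A : zmodType) (mul : A -> A -> A) x s :
  s != [::] -> wprod mul (rcons s x) = mul (wprod mul s) x.
Proof. by case: s => [|y s] //= _; rewrite -cats1 foldl_cat. Qed.

Lemma wprod_merge (A : zmodType) (mul : A -> A -> A)
  (assoc : forall x y z, mul x (mul y z) = mul (mul x y) z) s1 x y s2 :
  wprod mul (s1 ++ x :: y :: s2) = wprod mul (s1 ++ mul x y :: s2).
Proof.
case: s1 => [|a s1] //=; rewrite !foldl_cat /=; by rewrite assoc.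
Qed.

Lemma eq_prodf (A : zmodType) (mul : A -> A -> A) k f g :
  (forall i, i < k -> f i = g i) -> prodf mul k f = prodf mul k g.
Proof.
move=> H; rewrite /prodf; congr wprod; apply/eq_in_map => i.
by rewrite mem_iota add0n => /andP [_ /H].
Qed.

Lemma map_iota_shift (A : Type) (f : nat -> A) m c :
  map f (iota m c) = map (fun x => f (m + x)) (iota 0 c).
Proof. by rewrite -{1}(addn0 m) iotaDl -map_comp. Qed.

Lemma prodf_first (A : zmodType) (mul : A -> A -> A)
  (assoc : forall x y z, mul x (mul y z) = mul (mul x y) z) k f :
  0 < k -> prodf mul k.+1 f = mul (f 0) (prodf mul k (fun i => f i.+1)).
Proof.
move=> hk; rewrite /prodf.
have -> : iota 0 k.+1 = 0 :: iota 1 k by [].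
rewrite map_cons wprod_cons //; last by case: k hk.
by rewrite (map_iota_shift _ 1).
Qed.

Lemma prodf_last (A : zmodType) (mul : A -> A -> A) k f :
  0 < k -> prodf mul k.+1 f = mul (prodf mul k f) (f k).
Proof.
move=> hk; rewrite /prodf -addn1 iotaD map_cat cats1 wprod_rcons //.
by case: k hk.
Qed.

Lemma prodf_merge (A : zmodType) (mul : A -> A -> A)
  (assoc : forall x y z, mul x (mul y z) = mul (mul x y) z) k i f :
  i < k -> prodf mul k.+1 f = prodf mul k (mrg mul i f).
Proof.
move=> hik; rewrite /prodf.
have -> : k.+1 = i + (k - i).+1 by lia.
have e : k = i + (k - i) by lia.
rewrite [in RHS]e !iotaD !map_cat.
have -> : k - i = (k - i - 1).+1 by lia.
rewrite /= add0n wprod_merge //.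
have -> : [seq mrg mul i f x | x <- iota 0 i] = [seq f x | x <- iota 0 i].
  apply/eq_in_map => x; rewrite mem_iota add0n /mrg => /andP [_ ->] //.
rewrite /mrg ltnn eqxx; congr (wprod _ (_ ++ _ :: _)).
rewrite (map_iota_shift _ i.+2) (map_iota_shift _ i.+1).
apply: eq_map => x /=; cases; fin.
Qed.



Definition Gw (A : zmodType) (mul : A -> A -> A) n f (z : A) g := prodf mul n.+1 (ins g f z).

Lemma G_trans (A : zmodType) (mul : A -> A -> A)
  (assoc : forall x y z, mul x (mul y z) = mul (mul x y) z)
  n (sn si : nat -> nat)
  (hsn : forall i, i < n -> sn i < n) (hsi : forall i, i < n -> si i < n)
  (hsnsi : forall i, i < n -> sn (si i) = i) (hsisn : forall i, i < n -> si (sn i) = i)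
  (Id : forall f, prodf mul n f = prodf mul n (fun i => f (sn i))) :
  (forall f z k, k < n -> Gw mul n f z k = Gw mul n (fun i => f (sn i)) z (si k)) /\
  (forall f z k, k < n -> Gw mul n f z k.+1 = Gw mul n (fun i => f (sn i)) z (si k).+1) /\
  (forall f z, Gw mul n f z 0 = Gw mul n (fun i => f (sn i)) z 0) /\
  (forall f z, Gw mul n f z n = Gw mul n (fun i => f (sn i)) z n).
Proof.
have Idu : forall f k y, k < n ->
    prodf mul n (upd f k y) = prodf mul n (upd (fun i => f (sn i)) (si k) y).
  move=> f k y hk; rewrite Id; apply: eq_prodf => i hi; rewrite /upd.
  have [e|ne] := eqVneq (sn i) k.
    by rewrite -e hsisn // eqxx.
  case: eqVneq => // ei; case/eqP: ne; by rewrite ei hsnsi.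
have Ga : forall f z k, k < n -> Gw mul n f z k = prodf mul n (upd f k (mul z (f k))).
  move=> f z k hk; rewrite /Gw (prodf_merge assoc (i := k)) //.
  apply: eq_prodf => i hi; rewrite /mrg /upd /ins; cases; fin.
have Gb : forall f z k, k < n -> Gw mul n f z k.+1 = prodf mul n (upd f k (mul (f k) z)).
  move=> f z k hk; rewrite /Gw (prodf_merge assoc (i := k)) //.
  apply: eq_prodf => i hi; rewrite /mrg /upd /ins; cases; fin.
have n0 : forall f z, 0 < n -> Gw mul n f z 0 = mul z (prodf mul n f).
  move=> f z hn; rewrite /Gw prodf_first //; congr mul.
have nn : forall f z, 0 < n -> Gw mul n f z n = mul (prodf mul n f) z.
  move=> f z hn; rewrite /Gw prodf_last //; rewrite /ins ltnn eqxx; congr mul.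
  apply: eq_prodf => i hi; rewrite /ins; cases; fin.
split; [|split; [|split]].
- move=> f z k hk; rewrite Ga // Idu // Ga ?hsi // hsnsi //.
- move=> f z k hk; rewrite Gb // Idu // Gb ?hsi // hsnsi //.
- move=> f z; case: n hsn Id n0 {Idu Ga Gb nn hsi hsnsi hsisn} => [|n'] hsn Id n0.
    rewrite /Gw /prodf //.
  by rewrite !n0 // -Id.
- move=> f z; case: n hsn Id nn {Idu Ga Gb n0 hsi hsnsi hsisn} => [|n'] hsn Id nn.
    rewrite /Gw /prodf //.
  by rewrite !nn // -Id.
Qed.

Lemma chains (A : zmodType) (mul : A -> A -> A)
  n (sn si : nat -> nat)
  (hsn : forall i, i < n -> sn i < n) (hsi : forall i, i < n -> si i < n)
  (hsnsi : forall i, i < n -> sn (si i) = i) (hsisn : forall i, i < n -> si (sn i) = i)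
  (GA : forall f z k, k < n -> Gw mul n f z k = Gw mul n (fun i => f (sn i)) z (si k))
  (GB : forall f z k, k < n -> Gw mul n f z k.+1 = Gw mul n (fun i => f (sn i)) z (si k).+1)
  (G0 : forall f z, Gw mul n f z 0 = Gw mul n (fun i => f (sn i)) z 0)
  (Gn : forall f z, Gw mul n f z n = Gw mul n (fun i => f (sn i)) z n)
  (n0 : 0 < n) (h0 : sn 0 != 0) (h1 : sn n.-1 != n.-1) :
  (exists2 m, 2 <= m <= n & forall f z, Gw mul n f z 0 = Gw mul n f z m) /\
  (exists2 m, m + 2 <= n & forall f z, Gw mul n f z n = Gw mul n f z m).
Proof.
have inj : forall i j, i < n -> j < n -> sn i = sn j -> i = j.
  by move=> i j hi hj e; rewrite -(hsisn i hi) e hsisn.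
have E0 : forall f z, Gw mul n f z 0 = Gw mul n f z (sn 0).
  by move=> f z; rewrite G0 (GA f z (sn 0)) ?hsn // hsisn.
have p0n := hsn 0 n0.
split.
  case: (ltnP 1 (sn 0)) => hp.
    by exists (sn 0); [lia | exact: E0].
  have p1 : sn 0 = 1 by move: h0; lia.
  set j := si 0.
  have jn : j < n by apply: hsi.
  have j0 : j != 0.
    apply/eqP => e; move: (hsnsi 0 n0); rewrite -/j e p1 //.
  have E1 : forall f z, Gw mul n f z 1 = Gw mul n (fun i => f (sn i)) z j.+1.
    by move=> f z; rewrite GB.
  case: (ltnP j.+1 n) => hj.
    set r := sn j.+1.
    have rn : r < n by apply: hsn.
    have r0 : r != 0.
      apply/eqP => e; have := hsisn _ hj; rewrite -/r e -/j; lia.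
    have r1 : r != 1.
      apply/eqP => e; have := hsisn _ hj; rewrite -/r e -p1 hsisn //; lia.
    exists r; first by move: r0 r1 rn; lia.
    by move=> f z; rewrite E0 p1 E1 (GA f z r) // /r hsisn.
  have jn1 : j.+1 = n by lia.
  exists n; first by move: p0n hp h0; lia.
  by move=> f z; rewrite E0 p1 E1 jn1 -Gn.
have nn : n.-1 < n by lia.
set q := sn n.-1.
have qn : q < n by apply: hsn.
have Eq : forall f z, Gw mul n f z n = Gw mul n f z q.+1.
  by move=> f z; rewrite GB // hsisn // Gn; congr Gw; lia.
case: (ltnP (q.+1 + 2) (n.+1)) => hq.
  by exists q.+1; [lia | exact: Eq].
have q2 : q = n.-2 by move: h1 qn hq; rewrite -/q; lia.
set j := si n.-1.
have jn : j < n by apply: hsi.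
have jn1 : j != n.-1.
  apply/eqP => e; move: (hsnsi _ nn); rewrite -/j e -/q; lia.
have E1 : forall f z, Gw mul n f z n = Gw mul n (fun i => f (sn i)) z j.
  have e : q.+1 = n.-1 by move: p0n h0 q2; lia.
  by move=> f z; rewrite Eq e GA.
have hjdef : sn j = n.-1 := hsnsi _ nn.
case: j jn jn1 E1 hjdef => [|j'] jn jn1 E1 hjdef.
  by exists 0; [lia | move=> f z; rewrite E1 -G0].
have rn : sn j' < n by apply: hsn; lia.
have rn1 : sn j' != n.-1.
  apply/eqP => e; have := inj j' j'.+1; rewrite e hjdef; lia.
have rn2 : sn j' != n.-2.
  apply/eqP => e; have := inj j' n.-1; rewrite e -/q q2; lia.
exists (sn j').+1; first by move: rn rn1 rn2; lia.
by move=> f z; rewrite E1 (GB f z (sn j')); [rewrite hsisn //; lia | lia].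
Qed.



Definition Ew (A : zmodType) (mul : A -> A -> A) n k l :=
  forall w (z : A), prodf mul n.+2 (ins k w z) = prodf mul n.+2 (ins l w z).

Lemma E_left (A : zmodType) (mul : A -> A -> A)
  (assoc : forall x y z, mul x (mul y z) = mul (mul x y) z) n m :
  0 < m <= n -> (forall f z, Gw mul n f z 0 = Gw mul n f z m) ->
  Ew mul n 0 m /\ Ew mul n 0 m.+1.
Proof.
move=> hm H; split => w z.
  rewrite !(@prodf_last _ mul n.+1) //; congr mul; first exact: H.
  rewrite /ins; cases; fin.
rewrite (@prodf_merge _ _ assoc n.+1 1) ?(@prodf_merge _ _ assoc n.+1 0); try lia.
transitivity (Gw mul n (mrg mul 0 w) z 0).
  apply: eq_prodf => i hi; rewrite /mrg /ins; cases; fin.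
rewrite H; apply: eq_prodf => i hi; rewrite /mrg /ins; cases; fin.
Qed.

Lemma E_right (A : zmodType) (mul : A -> A -> A)
  (assoc : forall x y z, mul x (mul y z) = mul (mul x y) z) n m :
  m + 2 <= n -> (forall f z, Gw mul n f z n = Gw mul n f z m) ->
  Ew mul n n.+1 m /\ Ew mul n n.+1 m.+1.
Proof.
move=> hm H; split => w z.
  rewrite (@prodf_merge _ _ assoc n.+1 n.-1) ?(@prodf_merge _ _ assoc n.+1 n); try lia.
  transitivity (Gw mul n (mrg mul n.-1 w) z n).
    apply: eq_prodf => i hi; rewrite /mrg /ins; cases; fin.
  rewrite H; apply: eq_prodf => i hi; rewrite /mrg /ins; cases; fin.
rewrite !(@prodf_first _ _ assoc n.+1) //; congr mul.
transitivity (Gw mul n (fun i => w i.+1) z n).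
  apply: eq_prodf => i hi; rewrite /ins; cases; fin.
rewrite H; apply: eq_prodf => i hi; rewrite /ins; cases; fin.
Qed.

Lemma ins_ext (A : Type) k (w w' : nat -> A) z i :
  (forall x, w x = w' x) -> ins k w z i = ins k w' z i.
Proof. by move=> H; rewrite /ins; cases; rewrite ?H. Qed.

Lemma E_down (A : zmodType) (mul : A -> A -> A) n k M :
  Ew mul n k.+1 k.+2 -> Ew mul n 0 M.+1 -> k.+1 <= M -> Ew mul n k k.+1.
Proof.
move=> H1 H2 hk w z.
set y := w M; set w1 := del M w.
have hw : forall x, w x = ins M w1 y x by move=> x; exact: ins_del.
transitivity (prodf mul n.+2 (ins M.+1 (ins k w1 z) y)).
  apply: eq_prodf => i _; rewrite -ins_comm; last lia.
  exact: ins_ext hw.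
rewrite -H2; transitivity (prodf mul n.+2 (ins k.+1 (ins 0 w1 y) z)).
  apply: eq_prodf => i _; exact: ins_comm.
rewrite H1; transitivity (prodf mul n.+2 (ins 0 (ins k.+1 w1 z) y)).
  apply: eq_prodf => i _; by rewrite -ins_comm.
rewrite H2; apply: eq_prodf => i _; rewrite -ins_comm //.
symmetry; exact: ins_ext hw.
Qed.

Lemma E_up (A : zmodType) (mul : A -> A -> A) n k M :
  Ew mul n k k.+1 -> Ew mul n M n.+1 -> M <= k -> k.+1 <= n -> Ew mul n k.+1 k.+2.
Proof.
move=> H1 H2 hk hkn w z.
set y := w M; set w1 := del M w.
have hw : forall x, w x = ins M w1 y x by move=> x; exact: ins_del.
transitivity (prodf mul n.+2 (ins M (ins k w1 z) y)).
  apply: eq_prodf => i _; rewrite ins_comm //.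
  exact: ins_ext hw.
rewrite H2; transitivity (prodf mul n.+2 (ins k (ins n w1 y) z)).
  apply: eq_prodf => i _; rewrite -ins_comm //; lia.
rewrite H1; transitivity (prodf mul n.+2 (ins n.+1 (ins k.+1 w1 z) y)).
  apply: eq_prodf => i _; rewrite ins_comm //.
rewrite -H2; apply: eq_prodf => i _; rewrite ins_comm; last lia.
symmetry; exact: ins_ext hw.
Qed.

Lemma E_all_left (A : zmodType) (mul : A -> A -> A) n M :
  Ew mul n 0 M -> Ew mul n 0 M.+1 -> forall k, k <= M -> Ew mul n k k.+1.
Proof.
move=> H0 H1.
have HM : Ew mul n M M.+1 by move=> w z; rewrite -H0 H1.
suff : forall d, d <= M -> Ew mul n (M - d) (M - d).+1.
  move=> H k hk; have := H (M - k) (leq_subr _ _).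
  by rewrite subKn.
elim=> [|d IH] hd; first by rewrite subn0.
apply: (E_down (M := M)); last lia.
  have -> : (M - d.+1).+1 = M - d by lia.
  apply: IH; lia.
exact: H1.
Qed.

Lemma E_all_right (A : zmodType) (mul : A -> A -> A) n M :
  Ew mul n n.+1 M -> Ew mul n n.+1 M.+1 -> M <= n ->
  forall k, M <= k <= n -> Ew mul n k k.+1.
Proof.
move=> H0 H1 hM.
have HM : Ew mul n M M.+1 by move=> w z; rewrite -H0 H1.
have HMn : Ew mul n M n.+1 by move=> w z; rewrite H0.
suff : forall d, M + d <= n -> Ew mul n (M + d) (M + d).+1.
  move=> H k /andP [h1 h2]; have := H (k - M); rewrite subnKC //; apply; lia.
elim=> [|d IH] hd; first by rewrite addn0.
rewrite addnS; apply: (E_up (M := M)); try lia.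
  apply: IH; lia.
exact: HMn.
Qed.



Definition ext (A : zmodType) N (b : 'I_N -> A) (i : nat) : A :=
  if insub i is Some j then b j else 0.

Lemma extE (A : zmodType) N (b : 'I_N -> A) (j : 'I_N) : ext b (val j) = b j.
Proof. by rewrite /ext valK. Qed.

Lemma ordprod_prodf (A : zmodType) (mul : A -> A -> A) N (b : 'I_N -> A) :
  ordprod mul b = prodf mul N (ext b).
Proof.
rewrite /ordprod /prodf -val_enum_ord -map_comp; congr wprod.
by apply: eq_map => j /=; rewrite extE.
Qed.

Lemma ordprod_ext (A : zmodType) (mul : A -> A -> A) N (b c : 'I_N -> A) :
  (forall i, b i = c i) -> ordprod mul b = ordprod mul c.
Proof. by move=> H; rewrite /ordprod; congr wprod; apply: eq_map. Qed.

Lemma inH1 (A : zmodType) (mul : A -> A -> A) N : inH mul (1 : 'S_N).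
Proof. by move=> a; apply: ordprod_ext => i; rewrite perm1. Qed.

Lemma inHM (A : zmodType) (mul : A -> A -> A) N (s t : 'S_N) :
  inH mul s -> inH mul t -> inH mul (s * t)%g.
Proof.
move=> Hs Ht a; rewrite Ht (Hs (fun i => a (t i))).
by apply: ordprod_ext => i; rewrite permM.
Qed.

Lemma tperm_val N (x y j : 'I_N) :
  val (tperm x y j) = if val j == val x then val y else if val j == val y then val x else val j.
Proof.
case: tpermP => [->|->|/eqP hx /eqP hy]; rewrite ?eqxx //.
  by case: eqP.
by rewrite !val_eqE (negbTE hx) (negbTE hy).
Qed.

Lemma inH_adj (A : zmodType) (mul : A -> A -> A) N k (hk1 : k.+1 < N) :
  (forall w z, prodf mul N (ins k w z) = prodf mul N (ins k.+1 w z)) ->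
  inH mul (tperm (Ordinal (ltnW hk1)) (Ordinal hk1)).
Proof.
move=> H a; rewrite !ordprod_prodf.
set e := ext a.
transitivity (prodf mul N (ins k (del k e) (e k))).
  by apply: eq_prodf => i _; apply: ins_del.
rewrite H; apply: eq_prodf => i hi.
have -> : i = val (Ordinal hi) by [].
rewrite extE -extE tperm_val /=.
rewrite /ins /del /e; cases; fin.
Qed.

Lemma inH_tperm_win (A : zmodType) (mul : A -> A -> A) N lo hi :
  (forall k (hk1 : k.+1 < N), lo <= k -> k.+1 < hi ->
     inH mul (tperm (Ordinal (ltnW hk1)) (Ordinal hk1))) ->
  forall c d : 'I_N, lo <= c -> c < d -> d < hi -> inH mul (tperm c d).
Proof.
move=> Hadj.
suff : forall e (c d : 'I_N), nat_of_ord d = c + e.+1 -> lo <= c -> d < hi -> inH mul (tperm c d).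
  move=> H c d h1 h2 h3; apply: (H (d - c.+1)) => //; lia.
elim=> [|e IH] c d hd hlo hhi.
  have hk1 : c.+1 < N by rewrite -(addn1 c) -hd.
  have -> : c = Ordinal (ltnW hk1) by apply: val_inj.
  have -> : d = Ordinal hk1 by apply: val_inj => /=; lia.
  apply: Hadj => //; lia.
have hd' : (c + e.+1) < N by move: (ltn_ord d); lia.
set d' := Ordinal hd'.
have -> : tperm c d = (tperm d' d * tperm c d' * tperm d' d)%g.
  rewrite -mulgA; have := tpermJ c d' (tperm d' d); rewrite conjgE tpermV => ->.
  rewrite tpermL tpermD //; apply/eqP => /(congr1 (@nat_of_ord _)) /=; lia.
apply: inHM; first apply: inHM.
- have hk1 : d'.+1 < N by rewrite /d' /=; move: (ltn_ord d); lia.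
  have -> : d' = Ordinal (ltnW hk1) by apply: val_inj.
  have -> : d = Ordinal hk1 by apply: val_inj => /=; lia.
  apply: Hadj => /=; lia.
- apply: IH => //=; lia.
- have hk1 : d'.+1 < N by rewrite /d' /=; move: (ltn_ord d); lia.
  have -> : d' = Ordinal (ltnW hk1) by apply: val_inj.
  have -> : d = Ordinal hk1 by apply: val_inj => /=; lia.
  apply: Hadj => /=; lia.
Qed.

Lemma inH_window (A : zmodType) (mul : A -> A -> A) N lo hi :
  (forall c d : 'I_N, lo <= c -> c < d -> d < hi -> inH mul (tperm c d)) ->
  forall t : 'S_N, (forall i : 'I_N, (i < lo) || (hi <= i) -> t i = i) -> inH mul t.
Proof.
elim: hi => [|hi IH] Hc t Ht.
  have -> : t = 1%g by apply/permP => i; rewrite perm1 Ht //; lia.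
  exact: inH1.
have Hc' : forall c d : 'I_N, lo <= c -> c < d -> d < hi -> inH mul (tperm c d).
  by move=> c d h1 h2 h3; apply: Hc => //; lia.
case: (ltnP hi lo) => hlo.
  have -> : t = 1%g by apply/permP => i; rewrite perm1 Ht //; lia.
  exact: inH1.
case: (ltnP hi N) => hN; last first.
  apply: IH => // i hi'; apply: Ht; move: (ltn_ord i); lia.
set x := Ordinal hN.
set c := t x.
have tinj : forall i j, t i = t j -> i = j := @perm_inj _ t.
have hc1 : lo <= c.
  rewrite leqNgt; apply/negP => hc.
  have := Ht c; rewrite hc => /(_ isT) e.
  have := tinj _ _ e => /(congr1 (@nat_of_ord _)); rewrite /x /=; lia.
have hc2 : c <= hi.
  rewrite leqNgt; apply/negP => hc.
  have := Ht c; rewrite hc orbT => /(_ isT) e.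
  have := tinj _ _ e => /(congr1 (@nat_of_ord _)); rewrite /x /=; lia.
have -> : t = (t * tperm c x * tperm c x)%g.
  by apply/permP => i; rewrite !permM tpermK.
apply: inHM; last first.
  case: (eqVneq c x) => [->|ne]; first by rewrite tperm1; apply: inH1.
  apply: Hc => //=.
  have : nat_of_ord c != hi by apply: contra ne => /eqP e; apply/eqP/val_inj.
  lia.
apply: IH => // i hi'.
rewrite permM.
case: (eqVneq i x) => [->|ne]; first by rewrite -/c tpermL.
have ti : t i = i.
  apply: Ht; have : nat_of_ord i != hi by apply: contra ne => /eqP e; apply/eqP/val_inj.
  lia.
rewrite ti tpermD //; last by rewrite eq_sym.
apply: contra ne => /eqP ec; apply/eqP; apply: tinj; by rewrite ti -ec.
Qed.


Theorem lemma2p14 (K : fieldType) (A : lmodType K) (mul : A -> A -> A)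
  (n : nat) (sigma : 'S_n) :
  assoc_algebra mul ->
  (0 < n)%N ->
  (forall i : 'I_n, nat_of_ord i = 0%N -> sigma i != i) ->
  (forall i : 'I_n, nat_of_ord i = n.-1 -> sigma i != i) ->
  inH mul sigma ->
  forall tau : 'S_(n + 2), tau \in Sab (n + 2) 4 4 -> inH mul tau.
Proof.
move=> [_ _ assoc] n0 hs0 hs1 Hs.
pose sn i := if insub i is Some j then nat_of_ord (sigma j) else 0.
pose si i := if insub i is Some j then nat_of_ord ((sigma^-1)%g j) else 0.
have snE : forall j : 'I_n, sn j = sigma j by move=> j; rewrite /sn valK.
have siE : forall j : 'I_n, si j = (sigma^-1)%g j by move=> j; rewrite /si valK.
have hsn : forall i, i < n -> sn i < n.
  by move=> i hi; rewrite (_ : i = Ordinal hi) // snE.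
have hsi : forall i, i < n -> si i < n.
  by move=> i hi; rewrite (_ : i = Ordinal hi) // siE.
have hsnsi : forall i, i < n -> sn (si i) = i.
  by move=> i hi; rewrite (_ : i = Ordinal hi) // siE snE permKV.
have hsisn : forall i, i < n -> si (sn i) = i.
  by move=> i hi; rewrite (_ : i = Ordinal hi) // snE siE permK.
have Id : forall f, prodf mul n f = prodf mul n (fun i => f (sn i)).
  move=> f; have := Hs (fun j => f j); rewrite !ordprod_prodf => H.
  transitivity (prodf mul n (ext (fun j : 'I_n => f j))).
    by apply: eq_prodf => i hi; rewrite (_ : i = Ordinal hi) // extE.
  rewrite H; apply: eq_prodf => i hi; rewrite (_ : i = Ordinal hi) // extE snE.
  done.
have [GA [GB [G0 Gn]]] := G_trans assoc hsn hsi hsnsi hsisn Id.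
have h0 : sn 0 != 0.
  have := hs0 (Ordinal n0) erefl; rewrite -val_eqE /= -(snE (Ordinal n0)) //.
have n1 : n.-1 < n by lia.
have h1 : sn n.-1 != n.-1.
  have := hs1 (Ordinal n1) erefl; rewrite -val_eqE /= -(snE (Ordinal n1)) //.
have [[m hm Hm] [m' hm' Hm']] := chains hsn hsi hsnsi hsisn GA GB G0 Gn n0 h0 h1.
have hm0 : 0 < m <= n by case/andP: hm => a b; apply/andP; split; lia.
have [L0 L1] := E_left assoc hm0 Hm.
have [R0 R1] := E_right assoc hm' Hm'.
have EL := E_all_left L0 L1.
have hm1 : m' <= n by lia.
have ER := E_all_right R0 R1 hm1.
move=> tau /gen_prodgP [k [c Hc ->]].
elim: k c Hc => [|k IH] c Hc; first by rewrite big_ord0; apply: inH1.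
rewrite big_ord_recr /=; apply: inHM; first by apply: IH => i; exact: Hc.
case/setUP: (Hc ord_max); rewrite inE => /forallP H.
  apply: (inH_window (lo:=0) (hi:=4)).
    apply: inH_tperm_win => j hk1 _ hj; apply: inH_adj => w z.
    rewrite addn2; apply: EL; lia.
  move=> i hi; apply/eqP; have := H i; rewrite (_ : 4 <= i) //; lia.
apply: (inH_window (lo:=n + 2 - 4) (hi:=n + 2)).
  apply: inH_tperm_win => j hk1 hj1 hj; apply: inH_adj => w z.
  rewrite addn2; apply: ER; lia.
move=> i hi; apply/eqP; have := H i; rewrite (_ : i < n + 2 - 4) //.
move: (ltn_ord i) hi; lia.
Qed.
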